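(* Let $n\ge 1$ be a number of qubits, let $\rho_0$ be an $n$-qubit input state, let $O$ be a Hermitian observable, and let $U(\theta)=\prod_{j=1}^{m}\exp(-i\theta_j H_j)$ be a parameterized unitary with Hermitian generators $H_j$ and parameters $\theta\in\mathbb{R}^m$. Define the cost $C_{\mathrm{uni}}(\theta)=\operatorname{Tr}[O\,U(\theta)\rho_0U(\theta)^\dagger]$, its infimum $C^*_{\mathrm{uni}}=\inf_\theta C_{\mathrm{uni}}(\theta)$, and consider gradient descent $\theta_{t+1}=\theta_t-\eta\nabla C_{\mathrm{uni}}(\theta_t)$ started from a random initialization $\theta_0$, with optimality gaps $\Delta_t=C_{\mathrm{uni}}(\theta_t)-C^*_{\mathrm{uni}}$. Assume: (i) (smoothness) $\|\nabla C_{\mathrm{uni}}(\theta)-\nabla C_{\mathrm{uni}}(\phi)\|_2\le\beta\|\theta-\phi\|_2$ for all $\theta,\phi$, equivalently $\|\nabla^2 C_{\mathrm{uni}}(\theta)\|_2\le\beta$ for all $\theta$, and $0<\eta\le 1/\beta$; (ii) (trajectory-uniform flatness) there are constants $B>0$ and $b>1$ such that $\mathbb{E}\big[\|\nabla C_{\mathrm{uni}}(\theta_t)\|_2^2\big]\le G(n):=m\,B\,b^{-n}$ for all $t\ge 0$ until the expected gap reaches a target $\varepsilon$ (i.e. for every $t$ such that $\mathbb{E}[\Delta_s]>\varepsilon$ for all $s\le t$). Suppose $\mathbb{E}[\Delta_0]\ge\delta_0>0$. If $\mathbb{E}[\Delta_T]\le\varepsilon<\delta_0$, then $$T\ \ge\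 \frac{2(\delta_0-\varepsilon)}{3\eta\,G(n)}=\Omega\!\left(\frac{b^n}{\eta\, m}\right).$$
   Context: Expectations are taken over the random initialization $\theta_0$ (gradient descent is deterministic thereafter). $\|\cdot\|_2$ denotes the Euclidean norm for vectors and the spectral norm for the Hessian. The $\Omega(\cdot)$ is asymptotic in the number of qubits $n$, with $\delta_0,\varepsilon,B,b$ fixed. *)

(* Defs.v *)
From mathcomp Require Import all_boot all_order all_algebra.
From mathcomp Require Import all_classical all_reals all_analysis.
From mathcomp Require Import complex.
Set Implicit Arguments. Unset Strict Implicit. Unset Printing Implicit Defensive.
Import Order.TTheory GRing.Theory Num.Theory numFieldTopology.Exports numFieldNormedType.Exports.
Local Open Scope ring_scope.
Local Open Scope complex_scope.

Section QDefs.
Variable R : realType.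

Definition adjmx {p q : nat} (A : 'M[R[i]]_(p, q)) : 'M[R[i]]_(q, p) :=
  (map_mx Num.conj A)^T.

Definition is_hermitian {N : nat} (A : 'M[R[i]]_N) : Prop := adjmx A = A.

(* positive semidefinite (order of R[i]: 0 <= z iff z is real and >= 0) *)
Definition psd {N : nat} (A : 'M[R[i]]_N) : Prop :=
  forall v : 'cV[R[i]]_N, 0 <= (adjmx v *m A *m v) 0 0.

Definition density {N : nat} (rho : 'M[R[i]]_N) : Prop :=
  [/\ is_hermitian rho, psd rho & \tr rho = 1].

(* matrix powers (N is not syntactically a successor, so we use mulmx) *)
Definition mxpow {N : nat} (A : 'M[R[i]]_N) (k : nat) : 'M[R[i]]_N :=
  iter k (mulmx A) 1%:M.

Definition expm_psum {N : nat} (A : 'M[R[i]]_N) (K : nat) : 'M[R[i]]_N :=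
  \sum_(k < K) ((k`!%:R : R[i])^-1 *: mxpow A k).

(* matrix exponential, entrywise limit of the (always convergent) series *)
Definition expm {N : nat} (A : 'M[R[i]]_N) : 'M[R[i]]_N :=
  \matrix_(i, j)
    ((limn (fun K => complex.Re (expm_psum A K i j)))
       +i* (limn (fun K => complex.Im (expm_psum A K i j)))).

Definition Uparam {N m : nat} (H : 'I_m -> 'M[R[i]]_N) (theta : 'rV[R]_m)
  : 'M[R[i]]_N :=
  \big[mulmx/1%:M]_(j < m) expm ((- 'i * (theta 0 j)%:C) *: H j).

Definition Cuni {N m : nat} (O rho0 : 'M[R[i]]_N) (H : 'I_m -> 'M[R[i]]_N)
  (theta : 'rV[R]_m) : R :=
  complex.Re (\tr (O *m Uparam H theta *m rho0 *m adjmx (Uparam H theta))).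

Definition Cstar {N m : nat} (O rho0 : 'M[R[i]]_N) (H : 'I_m -> 'M[R[i]]_N)
  : R := inf (range (Cuni O rho0 H)).

Definition grad {m : nat} (f : 'rV[R]_m -> R) (theta : 'rV[R]_m) : 'rV[R]_m :=
  \row_j ('D_(delta_mx 0 j) f theta).

Definition norm2 {m : nat} (v : 'rV[R]_m) : R :=
  Num.sqrt (\sum_(j < m) v 0 j ^+ 2).

Definition gd_iter {m : nat} (f : 'rV[R]_m -> R) (eta : R) (t : nat)
  (theta0 : 'rV[R]_m) : 'rV[R]_m :=
  iter t (fun th => th - eta *: grad f th) theta0.

Definition Expect {d} {Omega : measurableType d} (P : probability Omega R)
  (X : Omega -> R) : \bar R := (\int[P]_w (X w)%:E)%E.

End QDefs.

(* Main.v *)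
Require Import Defs.
From mathcomp Require Import all_boot all_order all_algebra.
From mathcomp Require Import all_classical all_reals all_analysis.
From mathcomp Require Import complex.
From mathcomp Require Import ring lra.
Import Order.TTheory GRing.Theory Num.Theory numFieldTopology.Exports numFieldNormedType.Exports.
Local Open Scope ring_scope.
Section Desc.
Variables (R : realType) (m : nat).
Implicit Types (f : 'rV[R]_m -> R) (x v : 'rV[R]_m).

Definition dotp (u v : 'rV[R]_m) : R := \sum_(j < m) u 0 j * v 0 j.

Lemma diff_dot f x v : differentiable f x -> 'd f x v = dotp v (grad f x).
Proof.
move=> df; rewrite {1}(row_sum_delta v) linear_sum /dotp; apply: eq_bigr => j _.
by rewrite linearZ /= /grad mxE deriveE.
Qed.

Lemma phi_derive f th v s : differentiable f (s *: v + th) ->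
  is_derive s 1 (fun s => f (s *: v + th)) ('d f (s *: v + th) v).
Proof.
move=> df.
have E : (fun h : R => h^-1 *: (((fun s => f (s *: v + th)) \o shift s) (h *: 1) - f (s *: v + th)))
   = (fun h => h^-1 *: ((f \o shift (s *: v + th)) (h *: v) - f (s *: v + th))).
  apply/funext => h /=; congr (_ *: (f _ - _)).
  by rewrite /shift /= [h *: 1]mulr1 scalerDl addrA.
split; first by rewrite /derivable E; exact: diff_derivable.
by rewrite /derive E -deriveE.
Qed.
Lemma dotpZl a u w : dotp (a *: u) w = a * dotp u w.
Proof. by rewrite /dotp mulr_sumr; apply: eq_bigr => j _; rewrite mxE mulrA. Qed.
Lemma dotpZr a u w : dotp u (a *: w) = a * dotp u w.
Proof. by rewrite /dotp mulr_sumr; apply: eq_bigr => j _; rewrite mxE mulrCA. Qed.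
Lemma dotpNr u w : dotp u (- w) = - dotp u w.
Proof. by rewrite /dotp -sumrN; apply: eq_bigr => j _; rewrite mxE mulrN. Qed.
Lemma subr_ge0_helper (a : R) : a <= 1 -> 0 <= 1 - a.
Proof. by rewrite subr_ge0. Qed.
Lemma dotpNl u w : dotp (- u) w = - dotp u w.
Proof. by rewrite /dotp -sumrN; apply: eq_bigr => j _; rewrite mxE mulNr. Qed.
Lemma dotpBr u a b : dotp u (a - b) = dotp u a - dotp u b.
Proof. by rewrite /dotp -sumrB; apply: eq_bigr => j _; rewrite !mxE mulrBr. Qed.
Lemma dotp_ge0 u : 0 <= dotp u u.
Proof. by apply: sumr_ge0 => j _; rewrite -expr2 sqr_ge0. Qed.
Lemma norm2_sq (u : 'rV[R]_m) : norm2 u ^+ 2 = dotp u u.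
Proof. rewrite /norm2 sqr_sqrtr; last by apply: sumr_ge0 => j _; rewrite sqr_ge0.
by apply: eq_bigr => j _; rewrite expr2. Qed.
Lemma norm2_ge0 (u : 'rV[R]_m) : 0 <= norm2 u.
Proof. exact: sqrtr_ge0. Qed.
Lemma dotp_lam lam u w : 0 <= 2 * lam * dotp u w + lam ^+ 2 * dotp u u + dotp w w.
Proof.
have -> : 2 * lam * dotp u w + lam ^+ 2 * dotp u u + dotp w w =
   \sum_(j < m) (lam * u 0 j + w 0 j) ^+ 2.
  rewrite /dotp !mulr_sumr -!big_split /=; apply: eq_bigr => j _.
  by rewrite sqrrD; rewrite !expr2; ring.
by apply: sumr_ge0 => j _; rewrite sqr_ge0.
Qed.

Lemma descent f beta eta th :
  (forall x, differentiable f x) ->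
  (forall x y, norm2 (grad f x - grad f y) <= beta * norm2 (x - y)) ->
  0 < beta -> 0 < eta -> eta * beta <= 1 ->
  f th - (3 / 2) * eta * norm2 (grad f th) ^+ 2 <= f (th - eta *: grad f th).
Proof.
move=> df lip b0 e0 eb.
set g := grad f th; set v := - (eta *: g).
set V := dotp v v; set D0 := dotp v g; set c := beta * V / 2.
pose psi : R -> R := (fun s => f (s *: v + th)) - D0 \*: id + c \*: (id ^+ 2).
have dpsi (s : R) : is_derive s (1 : R) psi ('d f (s *: v + th) v - D0 *: 1 + c *: ((2%:R * s ^+ 1) *: 1)).
  apply: is_deriveD; apply: is_deriveB; exact: phi_derive.
have key : psi 0 <= psi 1.
  apply: (ger0_derive1_ndecr (a:=0) (b:=1)) => //.
  - move=> x; rewrite in_itv /= => /andP[x0 x1].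
    rewrite derive1E derive_val diff_dot // [D0%:A]mulr1 [(_ * x ^+ 1)%:A]mulr1 expr1.
    change (c *: (2 * x)) with (c * (2 * x)).
    set w := grad f (x *: v + th) - g.
    have Hw : dotp w w <= beta ^+ 2 * x ^+ 2 * V.
      have h1 := lip (x *: v + th) th.
      have h2 : norm2 (x *: v + th - th) ^+ 2 = x ^+ 2 * V.
        by rewrite addrK norm2_sq dotpZl dotpZr mulrA expr2.
      rewrite -norm2_sq.
      have n0 := norm2_ge0 w; have n1 := norm2_ge0 (x *: v + th - th).
      rewrite -/w in h1; nra.
    have := dotp_lam (beta * x) v w.
    have : dotp v (grad f (x *: v + th)) = dotp v w + D0 by rewrite /w dotpBr subrK.
    move=> ->. rewrite -/V /c => H.
    have V0 : 0 <= V by exact: dotp_ge0.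
    have bx : 0 < beta * x by rewrite mulr_gt0.
    nra.
  - by apply: derivable_within_continuous => x _; case: (dpsi x).
have key' : f (0 *: v + th) - D0 * 0 + c * (0 ^+ 2) <= f (1 *: v + th) - D0 * 1 + c * (1 ^+ 2) by exact: key.
move: key'; rewrite scale0r add0r scale1r !mulr0 subr0 expr0n /= mulr0 addr0 expr1n !mulr1 addrC.
have G0 : 0 <= norm2 g ^+ 2 by rewrite sqr_ge0.
rewrite /c /V /D0 /v dotpNl dotpZl dotpNl !dotpZl dotpNr dotpZr -norm2_sq.
move=> H.
have eb' : 0 <= 1 - eta * beta by rewrite subr_ge0.
have H2 := mulr_ge0 (mulr_ge0 (ltW e0) G0) eb'.
rewrite [- _ + th]addrC in H.
rewrite -/g; nra.
Qed.
End Desc.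

Lemma comb (R : realType) (a g : nat -> R) (k G d0 eps : R) (T : nat) :
  0 <= k -> 0 <= G -> (forall t, a t <= a t.+1 + k * g t) ->
  (forall t, (forall s, (s <= t)%N -> eps < a s) -> g t <= G) ->
  d0 <= a 0%N -> a T <= eps -> d0 - eps <= k * T%:R * G.
Proof.
move=> k0 G0 rec hg ha0 haT.
have claim : forall t, (forall s, (s < t)%N -> eps < a s) -> d0 - k * t%:R * G <= a t.
  elim=> [|t IH] H; first by rewrite mulr0 mul0r subr0.
  have h1 := IH (fun s st => H s (leq_trans st (leqnSn _))).
  have h2 : g t <= G by apply: hg => s st; apply: H; rewrite ltnS.
  have h3 := rec t.
  rewrite -natr1 mulrDr mulr1 mulrDl.
  have : k * g t <= k * G by rewrite ler_wpM2l.
  lra.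
have exP : exists n, (fun n => a n <= eps) n by exists T.
case: (ex_minnP exP) => T' HT' Hmin.
have HT'T : (T' <= T)%N by apply: Hmin.
have h1 : forall s, (s < T')%N -> eps < a s.
  move=> s sT; rewrite ltNge; apply/negP => /Hmin.
  by rewrite leqNgt sT.
have h2 := claim T' h1.
have h3 : k * T'%:R * G <= k * T%:R * G.
  by rewrite ler_wpM2r // ler_wpM2l // ler_nat.
lra.
Qed.

Lemma gd_iterS (R : realType) m (f : 'rV[R]_m -> R) eta t x :
  gd_iter f eta t.+1 x = gd_iter f eta t x - eta *: grad f (gd_iter f eta t x).
Proof. by []. Qed.
Lemma aux1 (R : realType) (x y z c k : R) : x - k * z <= y -> x - c <= y - c + k * z.
Proof. lra. Qed.

Theorem lemma4 (R : realType) (n m : nat) (Obs rho0 : 'M[R[i]]_(2 ^ n))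
  (H : 'I_m -> 'M[R[i]]_(2 ^ n))
  (d : measure_display) (Omega : measurableType d) (P : probability Omega R)
  (theta0 : Omega -> 'rV[R]_m)
  (beta eta B b delta0 eps : R) (T : nat) :
  (1 <= n)%N ->
  density rho0 ->
  is_hermitian Obs ->
  (forall j, is_hermitian (H j)) ->
  let Cu := Cuni Obs rho0 H in
  let Cst := Cstar Obs rho0 H in
  let theta t w := gd_iter Cu eta t (theta0 w) in
  let Delta t w := Cu (theta t w) - Cst in
  let gnorm2 t w := norm2 (grad Cu (theta t w)) ^+ 2 in
  let G := m%:R * B * b ^- n in
  (* expectations are well defined *)
  (forall t, P.-integrable setT (fun w => (Delta t w)%:E)) ->
  (forall t, P.-integrable setT (fun w => (gnorm2 t w)%:E)) ->
  (* (i) smoothness *)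
  (forall th, differentiable Cu th) ->
  (forall th ph, norm2 (grad Cu th - grad Cu ph) <= beta * norm2 (th - ph)) ->
  0 < beta -> 0 < eta -> eta <= beta^-1 ->
  (* (ii) trajectory-uniform flatness *)
  0 < B -> 1 < b ->
  (forall t : nat, (forall s : nat, (s <= t)%N -> (eps%:E < Expect P (Delta s))%E) ->
     (Expect P (gnorm2 t) <= G%:E)%E) ->
  0 < delta0 ->
  (delta0%:E <= Expect P (Delta 0%N))%E ->
  eps < delta0 ->
  (Expect P (Delta T) <= eps%:E)%E ->
  2 * (delta0 - eps) / (3 * eta * G) <= T%:R.
Proof.
move=> n1 dens herm hH Cu Cst theta Delta gnorm2 G iD iG dCu lip b0 e0 eb B0 b1 flat d0 hd0 epsd hT.
pose a t := fine (Expect P (Delta t)).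
pose gg t := fine (Expect P (gnorm2 t)).
have Ea t : Expect P (Delta t) = (a t)%:E.
  by rewrite /a fineK //; exact: (integrable_fin_num measurableT (iD t)).
have Eg t : Expect P (gnorm2 t) = (gg t)%:E.
  by rewrite /gg fineK //; exact: (integrable_fin_num measurableT (iG t)).
have eb' : eta * beta <= 1.
  by move: eb; rewrite -[beta^-1]mul1r ler_pdivlMr.
have pw t w : Delta t w <= Delta t.+1 w + 3 / 2 * eta * gnorm2 t w.
  have := @descent _ _ Cu beta eta (theta t w) dCu lip b0 e0 eb'.
  rewrite /Delta /gnorm2 /theta gd_iterS; exact: aux1.
clearbody Delta gnorm2.
have rec t : a t <= a t.+1 + (3 / 2 * eta) * gg t.
  have Hi : (\int[P]_w (Delta t w)%:E <= \int[P]_w ((Delta t.+1 w)%:E + (3 / 2 * eta)%:E * (gnorm2 t w)%:E))%E.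
    apply: le_integral => //.
    - exact: (integrableD measurableT (iD t.+1) (integrableZl measurableT (3 / 2 * eta) (iG t))).
    - move=> w _; rewrite -EFinM -EFinD lee_fin; exact: pw.
  rewrite (integralD measurableT (iD t.+1) (integrableZl measurableT (3 / 2 * eta) (iG t))) in Hi.
  rewrite (integralZl measurableT (iG t)) in Hi.
  move: (Ea t) (Ea t.+1) (Eg t); rewrite /Expect => E1 E2 E3.
  rewrite E1 E2 E3 in Hi.
  by rewrite -lee_fin EFinD EFinM.
have G0 : 0 <= G.
  rewrite /G; apply: mulr_ge0; first by apply: mulr_ge0 => //; exact: ltW.
  by rewrite invr_ge0 exprn_ge0 // ltW // (lt_trans _ b1).
have flat' t : (forall s, (s <= t)%N -> eps < a s) -> gg t <= G.
  move=> Hs; rewrite -lee_fin -Eg; apply: flat => s st; rewrite Ea lte_fin; exact: Hs.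
have k0 : 0 <= 3 / 2 * eta by rewrite mulr_ge0 // ltW.
have h0 : delta0 <= a 0%N by move: hd0; rewrite Ea lee_fin.
have hT' : a T <= eps by move: hT; rewrite Ea lee_fin.
have := @comb _ a gg _ G delta0 eps T k0 G0 rec flat' h0 hT'.
move=> Hc.
move: G0; rewrite le_eqVlt => /orP[/eqP G0|Gp].
  by rewrite -G0 mulr0 invr0 mulr0 ler0n.
rewrite ler_pdivrMr; last by apply: mulr_gt0 => //; apply: mulr_gt0.
nra.
Qed.
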